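(* Let $(\gamma_n)$ be a sequence of positive reals satisfying conditions (C1)–(C7) below, with associated polynomials $p_n$ and operators $K^n_t$. Then for all $f,g\in C^\infty_{\mathbb{R}\to\mathbb{C}}$ and all $n\in\mathbb{N}$, \[ \frac{d}{dt}\left[\sum_{m=0}^n K^m_t[f(t)]\,K^m_t[g(t)]\right]=\gamma_n\bigl(K^{n+1}_t[f(t)]\,K^n_t[g(t)]+K^n_t[f(t)]\,K^{n+1}_t[g(t)]\bigr). \]
   Context: Given positive reals $\gamma_n$, set $\gamma_{-1}=1$, $p_{-1}=0$, $p_0=1$ and $\gamma_n p_{n+1}(\omega)=\omega p_n(\omega)-\gamma_{n-1}p_{n-1}(\omega)$ ($n\ge0$). Let $\Delta_n=\gamma_{n+1}-\gamma_n$, $\Delta^2_n=\Delta_{n+1}-\Delta_n$. Conditions: (C1) $\gamma_n\to\infty$; (C2) $\Delta_n\to0$; (C3) there exist $n_0,m_0$ with $\gamma_{n+m}>\gamma_n$ for all $n\ge n_0$, $m\ge m_0$; (C4) $\sum 1/\gamma_j=\infty$; (C5) some $\kappa>1$ has $\sum\gamma_j^{-\kappa}<\infty$; (C6) $\sum|\Delta_n|/\gamma_n^2<\infty$; (C7) $\sum|\Delta^2_n|/\gamma_n<\infty$. $C^\infty_{\mathbb{R}\to\mathbb{C}}$ is the set of functions $\mathbb{R}\to\mathbb{C}$ whose real and imaginary parts are infinitely differentiable. The operators are $K^n_t=(-i)^n p_n\!\left(i\frac{d}{dt}\right)$. *)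

(* Defs.v *)
From Stdlib Require Import Reals.
From Coquelicot Require Import Coquelicot.
Open Scope R_scope.

(* A polynomial with real coefficients is represented by its coefficient
   sequence: [c k] is the coefficient of omega^k. *)
Definition rpoly := nat -> R.

Definition polyX (p : rpoly) : rpoly :=
  fun k => match k with O => 0 | S k' => p k' end.

(* gamma_{n-1} with the convention gamma_{-1} = 1 *)
Definition gprev (gam : nat -> R) (n : nat) : R :=
  match n with O => 1 | S n' => gam n' end.

(* ppair gam n = (p_{n-1}, p_n), with p_{-1} = 0, p_0 = 1 and
   gamma_n p_{n+1} = omega p_n - gamma_{n-1} p_{n-1}. *)
Fixpoint ppair (gam : nat -> R) (n : nat) : rpoly * rpoly :=
  match n with
  | O => (fun _ => 0, fun k => match k with O => 1 | S _ => 0 end)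
  | S n' =>
      let (a, b) := ppair gam n' in
      (b, fun k => (polyX b k - gprev gam n' * a k) / gam n')
  end.

Definition pcoef (gam : nat -> R) (n : nat) : rpoly := snd (ppair gam n).

Definition Cderive_n (f : R -> C) (k : nat) (t : R) : C :=
  (Derive_n (fun s => fst (f s)) k t, Derive_n (fun s => snd (f s)) k t).

Definition smoothC (f : R -> C) : Prop :=
  forall (k : nat) (t : R),
    ex_derive_n (fun s => fst (f s)) k t /\ ex_derive_n (fun s => snd (f s)) k t.

(* K^n_t [f(t)] = (-i)^n p_n(i d/dt) f (t)
   = (-i)^n * sum_{k=0}^{n} (coef_k p_n) i^k f^{(k)}(t)  (deg p_n <= n) *)
Definition Kop (gam : nat -> R) (n : nat) (f : R -> C) (t : R) : C :=
  Cmult (Cpow (Copp Ci) n)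
    (sum_n (fun k => Cmult (RtoC (pcoef gam n k))
                           (Cmult (Cpow Ci k) (Cderive_n f k t))) n).

Definition Delta (gam : nat -> R) (n : nat) : R := gam (S n) - gam n.
Definition Delta2 (gam : nat -> R) (n : nat) : R :=
  Delta gam (S n) - Delta gam n.

Definition cond_C1 (gam : nat -> R) : Prop := is_lim_seq gam p_infty.
Definition cond_C2 (gam : nat -> R) : Prop := is_lim_seq (Delta gam) 0.
Definition cond_C3 (gam : nat -> R) : Prop :=
  exists n0 m0 : nat, forall n m : nat, (n0 <= n)%nat -> (m0 <= m)%nat ->
    gam (n + m)%nat > gam n.
Definition cond_C4 (gam : nat -> R) : Prop :=
  is_lim_seq (sum_n (fun j => / gam j)) p_infty.
Definition cond_C5 (gam : nat -> R) : Prop :=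
  exists kappa : R, kappa > 1 /\ ex_series (fun j => / Rpower (gam j) kappa).
Definition cond_C6 (gam : nat -> R) : Prop :=
  ex_series (fun n => Rabs (Delta gam n) / (gam n) ^ 2).
Definition cond_C7 (gam : nat -> R) : Prop :=
  ex_series (fun n => Rabs (Delta2 gam n) / gam n).

(* Main.v *)
Require Import Defs.
From Stdlib Require Import Reals Lra Lia.
From Coquelicot Require Import Coquelicot.
Open Scope R_scope.

Definition CD (F : R -> C) (t : R) (d : C) : Prop :=
  is_derive (fun s => fst (F s)) t (fst d) /\ is_derive (fun s => snd (F s)) t (snd d).

Lemma isd_eq (f : R -> R) x a b : is_derive f x a -> a = b -> is_derive f x b.
Proof. intros H E; subst; exact H. Qed.

Lemma CD_eq F t a b : CD F t a -> a = b -> CD F t b.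
Proof. intros H E; subst; exact H. Qed.

Lemma CD_ext F G t a : (forall s, F s = G s) -> CD F t a -> CD G t a.
Proof.
  intros E [H1 H2]; split.
  - apply is_derive_ext with (f := fun s => fst (F s)); [intros; now rewrite E|exact H1].
  - apply is_derive_ext with (f := fun s => snd (F s)); [intros; now rewrite E|exact H2].
Qed.

Lemma CD_const z t : CD (fun _ => z) t (RtoC 0).
Proof. split; simpl; apply (@is_derive_const R_AbsRing R_NormedModule). Qed.

Lemma CD_plus F G t a b : CD F t a -> CD G t b ->
  CD (fun s => Cplus (F s) (G s)) t (Cplus a b).
Proof.
  intros [H1 H2] [H3 H4]; split; simpl.
  - exact (is_derive_plus _ _ _ _ _ H1 H3).
  - exact (is_derive_plus _ _ _ _ _ H2 H4).
Qed.

Lemma CD_mult F G t a b : CD F t a -> CD G t b ->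
  CD (fun s => Cmult (F s) (G s)) t (Cplus (Cmult a (G t)) (Cmult (F t) b)).
Proof.
  intros [H1 H2] [H3 H4]; split; simpl.
  - apply is_derive_ext with (f := fun s => @minus R_AbelianGroup (@mult R_Ring (fst (F s)) (fst (G s))) (@mult R_Ring (snd (F s)) (snd (G s)))).
    { intros; unfold minus, plus, opp, mult; simpl; ring. }
    eapply isd_eq.
    + apply (@is_derive_minus R_AbsRing R_NormedModule);
      (apply (@is_derive_mult R_AbsRing); [eassumption|eassumption|intros; apply Rmult_comm]).
    + unfold minus, plus, opp, mult; simpl; ring.
  - apply is_derive_ext with (f := fun s => @plus R_AbelianGroup (@mult R_Ring (fst (F s)) (snd (G s))) (@mult R_Ring (snd (F s)) (fst (G s)))).
    { intros; unfold minus, plus, opp, mult; simpl; ring. }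
    eapply isd_eq.
    + apply (@is_derive_plus R_AbsRing R_NormedModule);
      (apply (@is_derive_mult R_AbsRing); [eassumption|eassumption|intros; apply Rmult_comm]).
    + unfold minus, plus, opp, mult; simpl; ring.
Qed.

Lemma CD_scal z F t a : CD F t a -> CD (fun s => Cmult z (F s)) t (Cmult z a).
Proof.
  intros H. eapply CD_eq. apply CD_mult; [apply CD_const|exact H].
  destruct z, a, (F t); unfold Cmult, Cplus, RtoC; simpl; f_equal; ring.
Qed.

Lemma CD_sum (u : nat -> R -> C) du t n :
  (forall k, CD (u k) t (du k)) ->
  CD (fun s => sum_n (fun k => u k s) n) t (sum_n du n).
Proof.
  intros H; induction n.
  - apply CD_ext with (F := u 0%nat); [intros; now rewrite sum_O|]. rewrite sum_O; apply H.
  - apply CD_ext with (F := fun s => plus (sum_n (fun k => u k s) n) (u (S n) s));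
      [intros; now rewrite sum_Sn|]. rewrite sum_Sn.
    apply CD_plus; [exact IHn|apply H].
Qed.

Lemma CD_is_derive F t a : CD F t a -> @is_derive R_AbsRing C_R_NormedModule F t a.
Proof.
  intros [H1 H2].
  apply is_derive_ext with (f := fun s => (fst (F s), snd (F s))).
  { intros; destruct (F t0); reflexivity. }
  unfold is_derive.
  eapply filterdiff_ext_lin.
  - apply (filterdiff_comp'_2 (fun s => fst (F s)) (fun s => snd (F s))
            (fun u v => (u, v) : C_R_NormedModule) t _ _ (fun u v => (u, v)) H1 H2).
    eapply filterdiff_ext_lin.
    + apply filterdiff_ext with (f := fun y => y).
      { intros [x y]; reflexivity. }
      apply filterdiff_id.
    + intros [x y]; reflexivity.
  - intros y. destruct a; reflexivity.
Qed.

Lemma CD_Cder f k t : smoothC f -> CD (Cderive_n f k) t (Cderive_n f (S k) t).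
Proof.
  intros Hf; destruct (Hf (S k) t) as [H1 H2]; split; simpl.
  - apply Derive_correct; exact H1.
  - apply Derive_correct; exact H2.
Qed.

Definition pfst gam n := fst (ppair gam n).

Lemma pcoef_S gam m k : pcoef gam (S m) k =
  (polyX (pcoef gam m) k - gprev gam m * pfst gam m k) / gam m.
Proof. unfold pcoef, pfst; simpl; destruct (ppair gam m); reflexivity. Qed.

Lemma pfst_S gam m : pfst gam (S m) = pcoef gam m.
Proof. unfold pcoef, pfst; simpl; destruct (ppair gam m); reflexivity. Qed.

Lemma pdeg gam m : (forall k, (m <= k)%nat -> pfst gam m k = 0) /\
                   (forall k, (m < k)%nat -> pcoef gam m k = 0).
Proof.
  induction m as [|m [IH1 IH2]].
  - split; intros k Hk; [reflexivity|]. destruct k; [lia|reflexivity].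
  - split; intros k Hk.
    + rewrite pfst_S; apply IH2; lia.
    + rewrite pcoef_S. destruct k as [|k]; [lia|]. simpl.
      rewrite IH2 by lia. rewrite IH1 by lia. unfold Rdiv; ring.
Qed.

Lemma sum_shift {G : AbelianMonoid} (a : nat -> G) m :
  sum_n a (S m) = plus (a 0%nat) (sum_n (fun k => a (S k)) m).
Proof.
  induction m.
  - rewrite sum_Sn, !sum_O; reflexivity.
  - rewrite sum_Sn, IHm, sum_Sn, plus_assoc; reflexivity.
Qed.

Lemma sum_zero {G : AbelianMonoid} (a : nat -> G) m :
  (forall k, a k = zero) -> sum_n a m = zero.
Proof.
  intros H; induction m.
  - rewrite sum_O; apply H.
  - rewrite sum_Sn, IHm, H; apply plus_zero_l.
Qed.

Lemma plusC x y : @plus C_AbelianMonoid x y = Cplus x y.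
Proof. reflexivity. Qed.

Lemma sumC_mult z u n : Cmult z (sum_n u n) = sum_n (fun k => Cmult z (u k)) n.
Proof.
  induction n.
  - now rewrite !sum_O.
  - rewrite !sum_Sn, !plusC, <- IHn.
    destruct z, (sum_n u n), (u (S n)); unfold plus; simpl; unfold Cmult, Cplus; simpl; f_equal; ring.
Qed.

Lemma sumC_plus u v n : sum_n (fun k => Cplus (u k) (v k)) n = Cplus (sum_n u n) (sum_n v n).
Proof. apply (sum_n_plus u v n). Qed.

Lemma Ceq (a b c d : R) : a = c -> b = d -> @eq C (a, b) (c, d).
Proof. intros; subst; reflexivity. Qed.

Ltac cring := unfold plus, zero; simpl; unfold Cminus, Cmult, Cplus, Copp, RtoC, Ci; simpl; apply Ceq; ring.

Definition Aop (c : nat -> R) N f t :=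
  sum_n (fun k => Cmult (RtoC (c k)) (Cmult (Cpow Ci k) (Cderive_n f k t))) N.
Definition Dop (c : nat -> R) N f t :=
  sum_n (fun k => Cmult (RtoC (c k)) (Cmult (Cpow Ci k) (Cderive_n f (S k) t))) N.
Definition KP gam m f t := match m with O => RtoC 0 | S m' => Kop gam m' f t end.

Definition TT (f : R -> C) t (d : nat -> R) k := Cmult (RtoC (d k)) (Cmult (Cpow Ci k) (Cderive_n f k t)).

Lemma E3 gam m f t :
  Cmult (Cpow (Copp Ci) (S m)) (Cmult (RtoC (- gprev gam m)) (sum_n (TT f t (pfst gam m)) (S m)))
     = Cmult (RtoC (gprev gam m)) (KP gam m f t).
Proof.
  destruct m as [|m'].
  - rewrite sum_zero. simpl. cring.
    intros k; unfold TT, pfst; simpl. destruct (Cpow Ci k), (Cderive_n f k t); cring.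
  - rewrite pfst_S.
    rewrite sum_Sn, sum_Sn.
    destruct (pdeg gam m') as [_ Hd].
    unfold TT at 2 3. rewrite (Hd (S m')), (Hd (S (S m'))) by lia.
    simpl KP. unfold Kop.
    change (sum_n (fun k : nat => (pcoef gam m' k * (Ci ^ k * Cderive_n f k t))%C) m')
      with (sum_n (TT f t (pcoef gam m')) m').
    simpl Cpow.
    destruct (sum_n (TT f t (pcoef gam m')) m'), (Cpow (Copp Ci) m'),
      (Cmult (Cpow Ci (S m')) (Cderive_n f (S m') t)),
      (Cmult (Cpow Ci (S (S m'))) (Cderive_n f (S (S m')) t)). cring.
Qed.

Lemma Kalg gam m f t : gam m <> 0 ->
  Cmult (RtoC (gam m)) (Kop gam (S m) f t) =
  Cplus (Cmult (Cpow (Copp Ci) m) (Dop (pcoef gam m) m f t))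
        (Cmult (RtoC (gprev gam m)) (KP gam m f t)).
Proof.
  intros Hg.
  set (c := pcoef gam m). set (a := pfst gam m).
  set (T := fun (d : nat -> R) k => Cmult (RtoC (d k)) (Cmult (Cpow Ci k) (Cderive_n f k t))).
  assert (E1 : Cmult (RtoC (gam m)) (Aop (pcoef gam (S m)) (S m) f t) =
     Cplus (sum_n (T (polyX c)) (S m)) (Cmult (RtoC (- gprev gam m)) (sum_n (T a) (S m)))).
  { unfold Aop. rewrite sumC_mult, sumC_mult, <- sumC_plus. apply sum_n_ext; intro k.
    unfold T. rewrite pcoef_S. fold c a.
    destruct (Cmult (Cpow Ci k) (Cderive_n f k t)) as [x y].
    unfold Cmult, Cplus, RtoC; simpl; apply Ceq; field; exact Hg. }
  assert (E2 : sum_n (T (polyX c)) (S m) = Cmult Ci (Dop c m f t)).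
  { rewrite sum_shift. unfold Dop. rewrite sumC_mult.
    replace (T (polyX c) 0%nat) with (@zero C_AbelianMonoid).
    2:{ unfold T; simpl. destruct (Cderive_n f 0 t). cring. }
    rewrite plus_zero_l. apply sum_n_ext; intro k. unfold T; simpl.
    destruct (Cpow Ci k), (Cderive_n f (S k) t). cring. }
  pose proof (E3 gam m f t) as E3'. change (sum_n (T a) (S m)) with (sum_n (TT f t (pfst gam m)) (S m)) in E1.
  unfold Kop at 1. fold (Aop (pcoef gam (S m)) (S m) f t).
  transitivity (Cmult (Cpow (Copp Ci) (S m)) (Cmult (RtoC (gam m)) (Aop (pcoef gam (S m)) (S m) f t))).
  { destruct (Aop (pcoef gam (S m)) (S m) f t), (Cpow (Copp Ci) (S m)). cring. }
  rewrite E1, <- E3', E2. fold c. simpl Cpow.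
  destruct (Dop c m f t), (Cpow (Copp Ci) m), (sum_n (TT f t (pfst gam m)) (S m)). cring.
Qed.

Lemma Kderiv gam m f t : smoothC f ->
  CD (Kop gam m f) t (Cmult (Cpow (Copp Ci) m) (Dop (pcoef gam m) m f t)).
Proof.
  intros Hf. unfold Kop. apply CD_scal. unfold Dop.
  apply (CD_sum (fun k s => Cmult (RtoC (pcoef gam m k)) (Cmult (Cpow Ci k) (Cderive_n f k s)))).
  intros k. apply CD_scal, CD_scal, CD_Cder, Hf.
Qed.

Lemma Kderiv2 gam m f t : (forall n, 0 < gam n) -> smoothC f ->
  CD (Kop gam m f) t (Cminus (Cmult (RtoC (gam m)) (Kop gam (S m) f t))
                             (Cmult (RtoC (gprev gam m)) (KP gam m f t))).
Proof.
  intros Hp Hf. eapply CD_eq. apply Kderiv, Hf.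
  rewrite Kalg by (apply Rgt_not_eq, Hp).
  destruct (Cmult (Cpow (Copp Ci) m) (Dop (pcoef gam m) m f t)), (Cmult (RtoC (gprev gam m)) (KP gam m f t)).
  cring.
Qed.

Theorem lemma28 (gam : nat -> R) (hpos : forall n, 0 < gam n)
  (h1 : cond_C1 gam) (h2 : cond_C2 gam) (h3 : cond_C3 gam) (h4 : cond_C4 gam)
  (h5 : cond_C5 gam) (h6 : cond_C6 gam) (h7 : cond_C7 gam)
  (f g : R -> C) (hf : smoothC f) (hg : smoothC g) (n : nat) (t : R) :
  @is_derive R_AbsRing C_R_NormedModule
    (fun s => sum_n (fun m => Cmult (Kop gam m f s) (Kop gam m g s)) n) t
    (Cmult (RtoC (gam n))
       (Cplus (Cmult (Kop gam (S n) f t) (Kop gam n g t))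
              (Cmult (Kop gam n f t) (Kop gam (S n) g t)))).
Proof.
  apply CD_is_derive.
  induction n.
  - apply CD_ext with (F := fun s => Cmult (Kop gam 0 f s) (Kop gam 0 g s)).
    { intros; now rewrite sum_O. }
    eapply CD_eq. apply CD_mult; apply Kderiv2; assumption.
    simpl KP; simpl gprev.
    destruct (Kop gam 0 f t), (Kop gam 0 g t), (Kop gam 1 f t), (Kop gam 1 g t). cring.
  - apply CD_ext with (F := fun s => Cplus (sum_n (fun m => Cmult (Kop gam m f s) (Kop gam m g s)) n)
                                          (Cmult (Kop gam (S n) f s) (Kop gam (S n) g s))).
    { intros; now rewrite sum_Sn. }
    eapply CD_eq. apply CD_plus; [exact IHn|apply CD_mult; apply Kderiv2; assumption].
    simpl KP; simpl gprev.
    destruct (Kop gam n f t), (Kop gam n g t), (Kop gam (S n) f t), (Kop gam (S n) g t),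
      (Kop gam (S (S n)) f t), (Kop gam (S (S n)) g t). cring.
Qed.
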